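(* Let $\mathscr H$ be a Hilbert module over $A=M_d(\mathbb C)$. There exist vectors $g,h\in\mathscr H$ with $[g,h]=I$ if and only if the modular dimension of $\mathscr H$ is at least $d$.
   Context: A Hilbert module over $A=M_d(\mathbb C)$ is a left $A$-module $\mathscr H$ with a map $[\cdot,\cdot]:\mathscr H\times\mathscr H\to A$ such that for all $f,g,h\in\mathscr H$, $a\in A$: $[f+g,h]=[f,h]+[g,h]$; $[af,g]=a[f,g]$; $[g,f]=[f,g]^*$; $[f,f]\ge0$, and $[f,f]=0$ iff $f=0$; and $\mathscr H$ is complete in the norm $f\mapsto\|[f,f]\|^{1/2}$. A family $\{f_\alpha\}\subset\mathscr H$ is modular orthonormal if $[f_\alpha,f_\beta]=0$ for $\alpha\ne\beta$ and each $[f_\alpha,f_\alpha]$ is a minimal (rank-one) projection in $A$. A modular base is a maximal modular orthonormal family; all modular bases of $\mathscr H$ have the same cardinality, called the modular dimension of $\mathscr H$. $I$ denotes the $d\times d$ identity matrix. *)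

(* Defs.v *)
From HB Require Import structures.
From mathcomp Require Import all_boot all_order all_algebra.
From mathcomp Require Import complex.
From mathcomp Require Import classical_sets boolp reals.
Set Implicit Arguments. Unset Strict Implicit. Unset Printing Implicit Defensive.
Import Order.TTheory GRing.Theory Num.Theory.
Local Open Scope ring_scope.
Local Open Scope classical_set_scope.

Section HilbertModule.
Variables (R : realType) (d : nat).
Local Notation C := (R[i]).
Local Notation Md := ('M[C]_d).

Definition adjmx (A : Md) : Md := \matrix_(i, j) (A j i)^*.
Definition adjcv (v : 'cV[C]_d) : 'rV[C]_d := \row_j (v j 0)^*.

Definition psd (A : Md) : Prop :=
  adjmx A = A /\ forall v : 'cV[C]_d, 0 <= (adjcv v *m A *m v) 0 0.

Definition vnorm (v : 'cV[C]_d) : R :=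
  Num.sqrt (\sum_i ((complex.Re (v i 0)) ^+ 2 + (complex.Im (v i 0)) ^+ 2)).

Definition opnorm (A : Md) : R :=
  sup [set r : R | exists v : 'cV[C]_d, vnorm v <= 1 /\ r = vnorm (A *m v)].

Definition minimal_projection (P : Md) : Prop :=
  P *m P = P /\ adjmx P = P /\ \rank P = 1%N.

Variable (H : lmodType Md).

Definition hm_norm (ip : H -> H -> Md) (f : H) : R := Num.sqrt (opnorm (ip f f)).

Definition hm_complete (ip : H -> H -> Md) : Prop :=
  forall u : nat -> H,
    (forall e : R, 0 < e -> exists N, forall m n, (N <= m)%N -> (N <= n)%N ->
        hm_norm ip (u m - u n) < e) ->
    exists f : H, forall e : R, 0 < e -> exists N, forall n, (N <= n)%N ->
        hm_norm ip (u n - f) < e.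

Definition is_hilbert_module (ip : H -> H -> Md) : Prop :=
  [/\ forall f g h, ip (f + g) h = ip f h + ip g h,
      forall (a : Md) f g, ip (a *: f) g = a *m ip f g,
      forall f g, ip g f = adjmx (ip f g),
      forall f, psd (ip f f) /\ (ip f f = 0 <-> f = 0)
    & hm_complete ip].

Definition modular_orthonormal (ip : H -> H -> Md) (B : set H) : Prop :=
  (forall f g, B f -> B g -> f <> g -> ip f g = 0) /\
  (forall f, B f -> minimal_projection (ip f f)).

Definition modular_base (ip : H -> H -> Md) (B : set H) : Prop :=
  modular_orthonormal ip B /\
  forall B' : set H, modular_orthonormal ip B' -> B `<=` B' -> B' = B.

(* the modular dimension is at least n: a (equivalently, every) modular base
   has at least n elements *)
Definition modular_dim_ge (ip : H -> H -> Md) (n : nat) : Prop :=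
  exists B : set H, modular_base ip B /\
    exists s : 'I_n -> H, injective s /\ forall i, B (s i).

End HilbertModule.

(* Main.v *)
Require Import Defs.
From HB Require Import structures.
From mathcomp Require Import all_boot all_order all_algebra.
From mathcomp Require Import complex.
From mathcomp Require Import classical_sets boolp reals.
Set Implicit Arguments. Unset Strict Implicit. Unset Printing Implicit Defensive.
Import Order.TTheory GRing.Theory Num.Theory.
Local Open Scope ring_scope.

Section Mx.
Variable (C : numClosedFieldType).
Definition adj n (A : 'M[C]_n) : 'M[C]_n := \matrix_(i, j) (A j i)^*.

Lemma adjE n (A : 'M[C]_n) : adj A = map_mx Num.conj (trmx A).
Proof. by apply/matrixP => i j; rewrite !mxE. Qed.

Lemma adjK n (A : 'M[C]_n) : adj (adj A) = A.
Proof. by apply/matrixP => i j; rewrite !mxE conjCK. Qed.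

Lemma adjM n (A B : 'M[C]_n) : adj (A *m B) = adj B *m adj A.
Proof. by rewrite !adjE trmx_mul map_mxM. Qed.

Lemma adj_delta n (i j : 'I_n) : adj (delta_mx i j) = delta_mx j i.
Proof.
apply/matrixP => a b; rewrite !mxE.
by case: (a == j); case: (b == i); rewrite /= ?conjC1 ?conjC0.
Qed.

Lemma adj_diag n (D : 'rV[C]_n) : adj (diag_mx D) = diag_mx (map_mx Num.conj D).
Proof.
apply/matrixP => a b; rewrite !mxE; case: (eqVneq a b) => [->|/negPf ab].
  by rewrite !mulr1n.
by rewrite !mulr0n conjC0.
Qed.

Lemma diagonalize n (A : 'M[C]_n) : adj A = A ->
  exists (U : 'M[C]_n) (D : 'rV[C]_n),
    [/\ U *m adj U = 1%:M, adj U *m U = 1%:M & U *m A *m adj U = diag_mx D].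
Proof.
move=> hA.
have An : A \is normalmx.
  by apply/normalmxP; rewrite -adjE hA.
have /orthomx_spectralP Aeq := An.
set P := spectralmx A in Aeq; set D := spectral_diag A in Aeq.
have Pu : P \is unitarymx by exact: spectral_unitarymx.
have Pun : P \in unitmx by exact: unitarymx_unit.
have PP : P *m adj P = 1%:M by rewrite adjE; apply/unitarymxP.
have iP : invmx P = adj P by rewrite adjE invmx_unitary.
exists P, D; split => //.
  by rewrite -iP mulVmx.
rewrite Aeq iP !mulmxA PP mul1mx -mulmxA PP mulmx1 //.
Qed.
End Mx.

Section HM.
Variables (R : realType) (d : nat) (H : lmodType 'M[R[i]]_d)
  (ip : H -> H -> 'M[R[i]]_d) (hH : is_hilbert_module ip).
Local Notation C := (R[i]).

Lemma adjmxE (A : 'M[C]_d) : adjmx A = adj A.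
Proof. by []. Qed.

Lemma ipZl a f g : ip (a *: f) g = a *m ip f g.
Proof. by case: hH. Qed.

Lemma ipDl f g h : ip (f + g) h = ip f h + ip g h.
Proof. by case: hH. Qed.

Lemma ipS f g : ip g f = adj (ip f g).
Proof. by case: hH. Qed.

Lemma ip0l g : ip 0 g = 0.
Proof. by rewrite -(scale0r (0 : H)) ipZl mul0mx. Qed.

Lemma ipZr f a g : ip f (a *: g) = ip f g *m adj a.
Proof. by rewrite ipS ipZl adjM -ipS. Qed.

Lemma ipZZ a f b g : ip (a *: f) (b *: g) = a *m ip f g *m adj b.
Proof. by rewrite ipZr ipZl. Qed.

Lemma ip_eq0 f : ip f f = 0 -> f = 0.
Proof. by case: hH => _ _ _ /(_ f) [_ []]. Qed.

Lemma ip_psd f : psd (ip f f).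
Proof. by case: hH => _ _ _ /(_ f) []. Qed.

Lemma diag_delta (D : 'rV[C]_d) (i k j : 'I_d) :
  (delta_mx i k : 'M[C]_d) *m diag_mx D *m delta_mx k j = D 0 k *: delta_mx i j.
Proof.
rewrite -mulmxA.
have -> : diag_mx D *m delta_mx k j = D 0 k *: (delta_mx k j : 'M[C]_d).
  apply/matrixP => a b; rewrite mul_diag_mx !mxE.
  by case: (eqVneq a k) => [->|_]; rewrite ?mulr0 ?mulr1.
by rewrite -scalemxAr mul_delta_mx.
Qed.

Lemma psd_delta (c : C) k : psd (c *: (delta_mx k k : 'M[C]_d)) -> 0 <= c.
Proof.
move=> [_ /(_ (delta_mx k 0))].
have -> : adjcv (delta_mx k 0 : 'cV[C]_d) = delta_mx 0 k.
  by apply/rowP => j; rewrite !mxE; case: (j == k); rewrite ?conjC1 ?conjC0.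
by rewrite -scalemxAr mul_delta_mx -scalemxAl mul_delta_mx !mxE !eqxx mulr1.
Qed.

Lemma forward g h : ip g h = 1%:M ->
  exists g' : H, ip g' g' = 1%:M.
Proof.
move=> igh.
have hG : adj (ip g g) = ip g g by rewrite -ipS.
have [U [D [UU UU' UGU]]] := diagonalize hG.
have Dpos : forall k, 0 < D 0 k.
  move=> k; pose a := (delta_mx k k : 'M[C]_d) *m U.
  have ia : ip (a *: g) (a *: g) = D 0 k *: delta_mx k k.
    by rewrite ipZZ /a adjM adj_delta !mulmxA -(mulmxA _ U) -(mulmxA _ _ (adj U)) UGU diag_delta.
  have ge0 : 0 <= D 0 k by apply: (@psd_delta _ k); rewrite -ia; apply: ip_psd.
  rewrite lt_def ge0 andbT; apply/eqP => D0.
  have ag0 : a *: g = 0 by apply: ip_eq0; rewrite ia D0 scale0r.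
  have a0 : a = 0 by rewrite -(mulmx1 a) -igh -ipZl ag0 ip0l.
  have : (delta_mx k k : 'M[C]_d) = 0.
    by rewrite -(mulmx1 (delta_mx k k)) -UU mulmxA -/a a0 mul0mx.
  by move/matrixP/(_ k k); rewrite !mxE !eqxx => /eqP; rewrite oner_eq0.
pose c := \row_k (sqrtC (D 0 k))^-1 : 'rV[C]_d.
exists ((diag_mx c *m U) *: g).
rewrite ipZZ adjM adj_diag !mulmxA -(mulmxA _ U) -(mulmxA _ _ (adj U)) UGU.
rewrite !mulmx_diag; apply/matrixP => a b; rewrite !mxE.
case: (eqVneq a b) => [->|_]; rewrite ?mulr0n // !mulr1n.
have sp : 0 < sqrtC (D 0 b) by rewrite sqrtC_gt0.
rewrite geC0_conj; last by rewrite invr_ge0 ltW.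
rewrite mulrAC -invfM -expr2 sqrtCK mulVf //.
by rewrite gt_eqF.
Qed.

Local Open Scope classical_set_scope.

Lemma two_in (F : set H) (Fam : set (set H)) f g :
  total_on Fam subset ->
  (F `|` \bigcup_(X in Fam) X) f -> (F `|` \bigcup_(X in Fam) X) g ->
  (F f /\ F g) \/ exists X, Fam X /\ (F `|` X) f /\ (F `|` X) g.
Proof.
move=> tot [Ff|[X FX Xf]] [Fg|[Y FY Yg]].
- by left.
- by right; exists Y; split => //; split; [left|right].
- by right; exists X; split => //; split; [right|left].
- case: (tot X Y FX FY) => XY.
    by right; exists Y; split => //; split; right => //; apply: XY.
  by right; exists X; split => //; split; right => //; apply: XY.
Qed.

Lemma ortho_union (F : set H) (Fam : set (set H)) :
  modular_orthonormal ip F ->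
  (forall X, Fam X -> modular_orthonormal ip (F `|` X)) ->
  total_on Fam subset ->
  modular_orthonormal ip (F `|` \bigcup_(X in Fam) X).
Proof.
move=> [oF mF] hX tot; split.
  move=> f g Hf Hg fg; case: (two_in tot Hf Hg) => [[Ff Fg]|[X [FX [Xf Xg]]]].
    exact: oF.
  by case: (hX X FX) => o _; apply: o.
move=> f [Ff|[X FX Xf]]; first exact: mF.
by case: (hX X FX) => _ m; apply: m; right.
Qed.

Lemma extend_base (F : set H) : modular_orthonormal ip F ->
  exists B, modular_base ip B /\ F `<=` B.
Proof.
move=> oF.
have [A [PA maxA]] := @Zorn_bigcup H (fun X => modular_orthonormal ip (F `|` X))
  (fun Fam sub tot => ortho_union oF sub tot).
exists (F `|` A); split; last by move=> x Fx; left.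
split => // B' oB' hsub.
have AB' : A `<=` B' by move=> x Ax; apply: hsub; right.
have PB' : modular_orthonormal ip (F `|` B').
  have -> : F `|` B' = B' by apply/seteqP; split => x; [case=> // Fx; apply: hsub; left|right].
  exact: oB'.
have [eqAB|neAB] := pselect (A = B').
  by rewrite eqAB; apply/seteqP; split => x; [right|case=> // Fx; apply: hsub; left].
exfalso; apply: (maxA B') => //.
rewrite properEneq; split => //; apply/eqP => //.
Qed.

Lemma dim_from_unit g' : ip g' g' = 1%:M -> modular_dim_ge ip d.
Proof.
move=> i1.
pose fk k := (delta_mx k k : 'M[C]_d) *: g'.
have ipf j k : ip (fk j) (fk k) = delta_mx j j *m delta_mx k k.
  by rewrite ipZZ i1 mulmx1 adj_delta.
have fkinj : injective fk.
  move=> j k e; have := ipf j k; rewrite -e ipf !mul_delta_mx mul_delta_mx_cond.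
  case: (eqVneq j k) => // ne; rewrite mulr0n => /matrixP/(_ j j).
  by rewrite !mxE !eqxx => /eqP; rewrite oner_eq0.
have oF : modular_orthonormal ip (range fk).
  split.
    move=> f g [j _ <-] [k _ <-] ne; rewrite ipf mul_delta_mx_0 //.
    by apply/eqP => jk; apply: ne; rewrite jk.
  move=> f [k _ <-]; rewrite ipf mul_delta_mx; split; first exact: mul_delta_mx.
  by split; [exact: adj_delta | exact: mxrank_delta].
have [B [bB FB]] := extend_base oF.
by exists B; split => //; exists fk; split => // k; apply: FB; exists k.
Qed.

Lemma adjD (A B : 'M[C]_d) : adj (A + B) = adj A + adj B.
Proof. by apply/matrixP => i j; rewrite !mxE rmorphD. Qed.

Lemma adj0 : adj (0 : 'M[C]_d) = 0.
Proof. by apply/matrixP => i j; rewrite !mxE conjC0. Qed.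

Lemma ipDr f g h : ip f (g + h) = ip f g + ip f h.
Proof. by rewrite ipS ipDl adjD -!ipS. Qed.

Lemma ip0r f : ip f 0 = 0.
Proof. by rewrite ipS ip0l adj0. Qed.

Lemma ip_suml (x : 'I_d -> H) y : ip (\sum_i x i) y = \sum_i ip (x i) y.
Proof.
elim/big_rec2: _ => [|i a b _ <-]; first exact: ip0l.
by rewrite ipDl.
Qed.

Lemma ip_sumr (x : 'I_d -> H) y : ip y (\sum_i x i) = \sum_i ip y (x i).
Proof.
elim/big_rec2: _ => [|i a b _ <-]; first exact: ip0r.
by rewrite ipDr.
Qed.

Lemma proj_unit (P : 'M[C]_d) (i : 'I_d) : minimal_projection P ->
  exists a : 'M[C]_d, a *m P *m adj a = delta_mx i i.
Proof.
move=> [PP [aP rP]].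
have [U [D [UU UU' UPU]]] := diagonalize aP.
have DD : diag_mx D *m diag_mx D = diag_mx D.
  by rewrite -UPU -!mulmxA (mulmxA (adj U)) UU' mul1mx (mulmxA P) PP.
have PE : P = adj U *m diag_mx D *m U.
  by rewrite -UPU !mulmxA UU' mul1mx -mulmxA UU' mulmx1.
case: (boolP [exists k, D 0 k != 0]) => [/existsP[k Dk]| /existsPn allz]; last first.
  have D0 : diag_mx D = 0.
    by apply/matrixP => a b; rewrite !mxE; have := allz a; rewrite negbK => /eqP ->; rewrite mul0rn.
  by move: rP; rewrite PE D0 mulmx0 mul0mx mxrank0.
have Dk1 : D 0 k = 1.
  move/matrixP: DD => /(_ k k); rewrite mulmx_diag !mxE eqxx !mulr1n.
  by move=> e; apply: (mulIf Dk); rewrite mul1r.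
exists ((delta_mx i k : 'M[C]_d) *m U).
rewrite adjM adj_delta !mulmxA -(mulmxA _ U) -(mulmxA _ _ (adj U)) UPU diag_delta.
by rewrite Dk1 scale1r.
Qed.

Lemma backward : modular_dim_ge ip d -> exists g h : H, ip g h = 1%:M.
Proof.
move=> [B [[[oB mB] _] [s [sinj sB]]]].
have ex : forall i : 'I_d, exists a : 'M[C]_d,
    a *m ip (s i) (s i) *m adj a = delta_mx i i.
  by move=> i; apply: proj_unit; apply: mB.
have [a ha] := boolp.choice ex.
pose g := \sum_i a i *: s i.
exists g, g; rewrite ip_suml mx1_sum_delta; apply: eq_bigr => i _.
rewrite ip_sumr (bigD1 i) //= big1 ?addr0; first by rewrite ipZZ ha.
move=> j ji; rewrite ipZZ oB ?mulmx0 ?mul0mx //.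
by move=> e; move/negP: ji; apply; rewrite (sinj _ _ e).
Qed.
End HM.

Theorem mainTheorem7 (R : realType) (d : nat) (H : lmodType 'M[R[i]]_d)
  (ip : H -> H -> 'M[R[i]]_d) (hH : is_hilbert_module ip) :
  (exists g h : H, ip g h = 1%:M) <-> modular_dim_ge ip d.
Proof.
split; last exact: backward.
move=> [g [h e]]; have [g' i1] := forward hH e.
exact: (@dim_from_unit R d H ip hH g' i1).
Qed.
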